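(* For every integer $M\ge3$, the $M\times M$ circulant matrix $\mathbf C$ with first row $(1,-1,0,\dots,0,1)$ (i.e. $(\mathbf C\mathbf x)_p=x_p+x_{p-1}-x_{p+1}$ with indices modulo $M$) is invertible. Hence for every $\boldsymbol\psi\in\mathbb R^M$ the system $\mathbf C\mathbf x=\boldsymbol\psi$ has the unique solution $\mathbf x=\mathbf C^{-1}\boldsymbol\psi$; in particular, the Tensor Ring ranks, which satisfy $\mathbf C(\log r_1,\dots,\log r_M)^\top=\boldsymbol\psi$ with $\psi_p=\log\xi_p$, are uniquely determined by $\boldsymbol\psi$ via $r_p=\exp(x_p)$.
   Context: In the Tensor Ring model of order $M$ with ranks $(r_1,\dots,r_M)$, $\xi_p:=(\mathbb E[Y])^2v_{\{p,p+1\}}/(v_{\{p\}}v_{\{p+1\}})$ is a quantity computed from the mean $\mathbb E[Y]$ and pure interaction terms $v_S$ (inclusion–exclusion combinations of exact-sharing covariances of the observed tensor entries), and the paper shows that $x_p=\log r_p$ satisfies $x_p+x_{p-1}-x_{p+1}=\log\xi_p$ for $p=1,\dots,M$ (indices modulo $M$). *)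

(* Defs.v *)
From HB Require Import structures.
From mathcomp Require Import all_boot all_order all_algebra.
From mathcomp Require Import all_classical all_reals all_analysis.
Set Implicit Arguments. Unset Strict Implicit. Unset Printing Implicit Defensive.
Import Order.TTheory GRing.Theory Num.Theory.
Local Open Scope ring_scope.

Definition circC (R : pzRingType) (M : nat) : 'M[R]_M :=
  \matrix_(p < M, q < M)
     (((q : nat) == p)%N%:R
      + ((q : nat) == (p + M - 1) %% M)%N%:R
      - ((q : nat) == (p + 1) %% M)%N%:R).

(* Main.v *)
Require Import Defs.
From HB Require Import structures.
From mathcomp Require Import all_boot all_order all_algebra.
From mathcomp Require Import all_classical all_reals all_analysis.
From mathcomp Require Import zify ring.
Import Order.TTheory GRing.Theory Num.Theory.
Local Open Scope ring_scope.

Lemma modswap {M p q : nat} : (p < M)%N -> (q < M)%N ->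
  ((q == (p + M - 1) %% M) = (p == (q + 1) %% M))%N.
Proof.
move=> hp hq.
have E1 : ((p + M - 1) %% M = if p == 0 then M - 1 else p - 1)%N.
  case: eqP => [->|hp0]; first by rewrite add0n modn_small //; lia.
  have -> : (p + M - 1 = 1 * M + (p - 1))%N by lia.
  by rewrite modnMDl modn_small //; lia.
have E2 : ((q + 1) %% M = if q == M - 1 then 0 else q + 1)%N.
  case: eqP => [->|hq0]; first by (have -> : (M - 1 + 1 = M)%N by lia); rewrite modnn.
  by rewrite modn_small //; lia.
rewrite E1 E2; case: (p =P 0%N) => ?; case: (q =P (M-1)%N) => ?; apply/eqP/eqP; lia.
Qed.

Lemma circ_sym (R : realType) (M : nat) :
  circC R M + (circC R M)^T = 2%:M.
Proof.
apply/matrixP => i j; rewrite !mxE.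
rewrite (modswap (ltn_ord j) (ltn_ord i)) (modswap (ltn_ord i) (ltn_ord j)).
rewrite [(j : nat) == i]eq_sym.
have -> : ((i : nat) == j) = (i == j) by [].
case: (i == j); rewrite /= ?mulr1n ?mulr0n; ring.
Qed.

Lemma circ_unit (R : realType) (M : nat) : circC R M \in unitmx.
Proof.
rewrite unitmxE unitfE; apply/negP => /det0P [v vn0 vA].
set A := circC R M.
set s := v *m A *m v^T.
have s0 : s = 0 by rewrite /s vA mul0mx.
have sT : s^T = v *m A^T *m v^T by rewrite /s !trmx_mul trmxK mulmxA.
have sTs : s^T = s by rewrite [s]mx11_scalar tr_scalar_mx.
have : v *m (A + A^T) *m v^T = 0.
  by rewrite mulmxDr mulmxDl -sT sTs s0 addr0.
rewrite circ_sym mul_mx_scalar -scalemxAl => /matrixP /(_ 0 0).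
rewrite !mxE => /eqP; rewrite mulf_eq0 pnatr_eq0 /= => /eqP H.
have H2 := psumr_eq0P (fun j _ => sqr_ge0 (v 0 j)).
apply/negP: vn0; rewrite negbK; apply/eqP/matrixP => a b.
rewrite (ord1 a) mxE.
have Hs : \sum_(j < M) v 0 j ^+ 2 = 0.
  rewrite -[RHS]H; apply: eq_bigr => k _; by rewrite !mxE expr2.
have := H2 xpredT Hs b isT => /eqP; rewrite sqrf_eq0 => /eqP ->.
by [].
Qed.

Theorem mainTheorem12 (R : realType) (M : nat) (hM : (3 <= M)%N) :
  circC R M \in unitmx /\
  (forall psi : 'cV[R]_M,
     (forall x : 'cV[R]_M, circC R M *m x = psi <-> x = invmx (circC R M) *m psi) /\
     (forall r : 'cV[R]_M, (forall p, 0 < r p 0) ->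
        circC R M *m map_mx (@ln R) r = psi ->
        r = map_mx (@expR R) (invmx (circC R M) *m psi))).
Proof.
have U := circ_unit R M.
split => // psi.
have key : forall x : 'cV[R]_M, circC R M *m x = psi <-> x = invmx (circC R M) *m psi.
  move=> x; split => [<-|->]; first by rewrite mulKmx.
  by rewrite mulKVmx.
split => // r rpos /key <-.
apply/matrixP => i j; rewrite (ord1 j) !mxE lnK //.
by rewrite posrE.
Qed.
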